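(* Let $K$ be a field, $v:K\to\Gamma\cup\{\infty\}$ a valuation with valuation ring $\mathcal O_v$ and maximal ideal $\mathbf m_v$, and $F^vK$ the associated filtration. Let $\mathcal I$ be an ideal of $K\langle X\rangle=K\langle X_1,\dots,X_n\rangle$ generated by a monic Gröbner basis $\mathcal G\subset\mathcal O_v\langle X\rangle$ (w.r.t. a monomial ordering $\prec$ on words), with $\mathrm{LM}(g)\neq 1$ for all $g\in\mathcal G$. Let $A=K\langle X\rangle/\mathcal I$ and $\Lambda=(\mathcal O_v\langle X\rangle+\mathcal I)/\mathcal I$. Then: (i) setting $F^v_\gamma A=\{\sum_i\lambda_i\bar w_i\mid\lambda_i\in F^v_\gamma K,\ \bar w_i\in\overline{N(\mathcal G)}\}$ gives an exhaustive $\Gamma$-filtration $F^vA$ of $A$ with $F^v_\gamma K=K\cap F^v_\gamma A$ for all $\gamma$; (ii) $F^vA$ is separated, and $1\in F^v_0A\setminus F^v_{<0}A$; (iii) $F^v_0A=\mathcal O_v\langle X\rangle/\langle\mathcal G\rangle\cong\Lambda$ and $F^v_{<0}A=\mathbf m_vF^v_0A=\mathbf m_v\Lambda$, so the associated graded algebra $G(A)$ has $G(A)_0=\Lambda/\mathbf m_v\Lambda$; (iv) $F^vA$ is strong, i.e. $F^v_{\gamma_1}A\cdot F^v_{\gamma_2}A=F^v_{\gamma_1+\gamma_2}A$ for all $\gamma_1,\gamma_2$, and $G(A)$ is strongly graded, i.e. $G(A)_{\gamma_1}G(A)_{\gamma_2}=G(A)_{\gamma_1+\gamma_2}$.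
   Context: $\Gamma$ is a totally ordered abelian group. A valuation of $K$ is a surjective map $v:K\to\Gamma\cup\{\infty\}$ with $v(a)=\infty\iff a=0$, $v(ab)=v(a)+v(b)$, $v(a+b)\ge\min(v(a),v(b))$. $\mathcal O_v=\{v\ge0\}$, $\mathbf m_v=\{v>0\}$. $F^v_\gamma K=\{\lambda\in K\mid v(\lambda)\ge-\gamma\}$. An exhaustive $\Gamma$-filtration of a ring $S$: additive subgroups $F_\gamma S$ with $S=\bigcup F_\gamma S$, $F_{\gamma_1}S\subseteq F_{\gamma_2}S$ for $\gamma_1<\gamma_2$, $F_\gamma SF_\tau S\subseteq F_{\gamma+\tau}S$, $1\in F_0S$; $F_{<\gamma}S=\bigcup_{\gamma'<\gamma}F_{\gamma'}S$; separated means each nonzero $s$ lies in some $F_\gamma S\setminus F_{<\gamma}S$; $G(S)=\bigoplus_\gamma F_\gamma S/F_{<\gamma}S$. A monomial ordering is a well-ordering on words in $X_1,\dots,X_n$ with $u\prec v\Rightarrow wus\prec wvs$ and $u,v\preceq uv$; $\mathrm{LM},\mathrm{LC}$ are leading word and coefficient; monic means all $\mathrm{LC}=1$; a monic Gröbner basis of $I$ is a monic $\mathcal G\subset I$ with every nonzero $f\in I$ having $\mathrm{LM}(f)$ divisible (as a subword) by some $\mathrm{LM}(g)$. $N(\mathcal G)$ is the set of words divisible by no $\mathrm{LM}(g)$, and $\overline{N(\mathcal G)}$ its image in $A$ (a $K$-basis of $A$). *)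

(* Defs.v *)
From HB Require Import structures.
From Stdlib Require List.
From mathcomp Require Import all_boot all_order all_algebra.
Set Implicit Arguments. Unset Strict Implicit. Unset Printing Implicit Defensive.
Import Order.TTheory GRing.Theory.
Local Open Scope ring_scope.

Definition ordered_group (G : zmodType) (leG : rel G) : Prop :=
  [/\ (forall a, leG a a),
      (forall a b, leG a b -> leG b a -> a = b),
      (forall a b c, leG a b -> leG b c -> leG a c),
      (forall a b, leG a b \/ leG b a)
    & (forall a b c, leG a b -> leG (a + c) (b + c))].

Definition ltG (G : zmodType) (leG : rel G) (a b : G) : Prop := a <> b /\ leG a b.

(* Gamma u {oo} represented by option Gamma, None = oo *)
Definition leGi (G : zmodType) (leG : rel G) (x y : option G) : Prop :=
  match x, y with
  | _, None => True
  | None, Some _ => False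
  | Some a, Some b => leG a b
  end.

Definition addGi (G : zmodType) (x y : option G) : option G :=
  match x, y with
  | Some a, Some b => Some (a + b)
  | _, _ => None
  end.

(* min(x,y) <= z, written out *)
Definition valuation (K : fieldType) (G : zmodType) (leG : rel G)
  (v : K -> option G) : Prop :=
  [/\ (forall a, v a = None <-> a = 0),
      (forall a b, v (a * b) = addGi (v a) (v b)),
      (forall a b, leGi leG (v a) (v (a + b)) \/ leGi leG (v b) (v (a + b)))
    & (forall x : option G, exists a, v a = x)].

Definition in_Ov (K : fieldType) (G : zmodType) (leG : rel G) (v : K -> option G) (a : K) : Prop := leGi leG (Some 0) (v a).
Definition in_mv (K : fieldType) (G : zmodType) (leG : rel G) (v : K -> option G) (a : K) : Prop :=
  leGi leG (Some 0) (v a) /\ v a <> Some 0.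
Definition FK (K : fieldType) (G : zmodType) (leG : rel G) (v : K -> option G) (g : G) (a : K) : Prop :=
  leGi leG (Some (- g)) (v a).

Definition word (n : nat) := seq 'I_n.
(* an element of K<X> is a finitely supported coefficient function on words *)
Definition ncp (K : fieldType) (n : nat) := word n -> K.

Definition finsupp (K : fieldType) n (f : ncp K n) : Prop :=
  exists s : seq (word n), forall w, f w != 0 -> w \in s.

Definition nc0 (K : fieldType) (n : nat) : ncp K n := fun _ => 0.
Definition nc1 (K : fieldType) (n : nat) : ncp K n := fun w => if w == [::] then 1 else 0.
Definition ncC (K : fieldType) (n : nat) (c : K) : ncp K n := fun w => if w == [::] then c else 0.
Definition ncmono (K : fieldType) (n : nat) (u : word n) : ncp K n := fun w => if w == u then 1 else 0.
Definition ncadd (K : fieldType) (n : nat) (f g : ncp K n) : ncp K n := fun w => f w + g w.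
Definition ncsub (K : fieldType) (n : nat) (f g : ncp K n) : ncp K n := fun w => f w - g w.
Definition ncscale (K : fieldType) (n : nat) (c : K) (f : ncp K n) : ncp K n := fun w => c * f w.
Definition ncmul (K : fieldType) (n : nat) (f g : ncp K n) : ncp K n :=
  fun w => \sum_(i < (size w).+1) f (take i w) * g (drop i w).
Definition ncsum (K : fieldType) (n : nat) (l : seq (ncp K n)) : ncp K n := foldr (@ncadd K n) (@nc0 K n) l.

Definition ncOv (K : fieldType) n (G : zmodType) (leG : rel G) (v : K -> option G) (f : ncp K n) : Prop :=
  finsupp f /\ forall w, in_Ov leG v (f w).

Definition ideal_gen (K : fieldType) n (Gb : ncp K n -> Prop) (f : ncp K n) : Prop :=
  exists l : seq (ncp K n * ncp K n * ncp K n),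
    (forall t, List.In t l -> [/\ finsupp t.1.1, Gb t.1.2 & finsupp t.2]) /\
    forall w, f w = ncsum [seq ncmul (ncmul t.1.1 t.1.2) t.2 | t <- l] w.

Definition ideal_gen_Ov (K : fieldType) n (G : zmodType) (leG : rel G) (v : K -> option G) (Gb : ncp K n -> Prop)
  (f : ncp K n) : Prop :=
  exists l : seq (ncp K n * ncp K n * ncp K n),
    (forall t, List.In t l -> [/\ ncOv leG v t.1.1, Gb t.1.2 & ncOv leG v t.2]) /\
    forall w, f w = ncsum [seq ncmul (ncmul t.1.1 t.1.2) t.2 | t <- l] w.

Definition leW n (lt : rel (word n)) (u w : word n) : bool := (u == w) || lt u w.

Definition monomial_ordering n (lt : rel (word n)) : Prop :=
  [/\ (forall u, ~~ lt u u),
      (forall u v w, lt u v -> lt v w -> lt u w),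
      (forall u v, u != v -> lt u v || lt v u),
      well_founded (fun u v => lt u v)
    & (forall u v w s, lt u v -> lt (w ++ u ++ s) (w ++ v ++ s))] /\
  (forall u v, leW lt u (u ++ v) /\ leW lt v (u ++ v)).

Definition is_LM (K : fieldType) n (lt : rel (word n)) (f : ncp K n) (w : word n) : Prop :=
  f w != 0 /\ forall u, f u != 0 -> leW lt u w.

Definition monic_GB (K : fieldType) n (lt : rel (word n)) (Gb : ncp K n -> Prop)
  (I : ncp K n -> Prop) : Prop :=
  (forall g, Gb g -> [/\ finsupp g, I g & exists w, is_LM lt g w /\ g w = 1]) /\
  (forall f w, finsupp f -> I f -> is_LM lt f w ->
     exists g u, [/\ Gb g, is_LM lt g u & infix u w]).

Definition inN (K : fieldType) n (lt : rel (word n)) (Gb : ncp K n -> Prop) (w : word n) : Prop :=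
  forall g u, Gb g -> is_LM lt g u -> ~~ infix u w.

(* ---------- the quotient A = K<X>/I, handled through representatives ---------- *)
Definition congI (K : fieldType) n (Gb : ncp K n -> Prop) (f h : ncp K n) : Prop :=
  ideal_gen Gb (ncsub f h).

Definition FA (K : fieldType) n (G : zmodType) (leG : rel G) (v : K -> option G) (lt : rel (word n))
  (Gb : ncp K n -> Prop) (g : G) (f : ncp K n) : Prop :=
  exists l : seq (K * word n),
    (forall t, List.In t l -> FK leG v g t.1 /\ inN lt Gb t.2) /\
    congI Gb f (ncsum [seq ncscale t.1 (ncmono K t.2) | t <- l]).

(* F^v_{<gamma} A = union of F^v_gamma' A, gamma' < gamma; always taken to contain 0
   (this only matters when Gamma is trivial) *)
Definition FAlt (K : fieldType) n (G : zmodType) (leG : rel G) (v : K -> option G) (lt : rel (word n))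
  (Gb : ncp K n -> Prop) (g : G) (f : ncp K n) : Prop :=
  congI Gb f (@nc0 K n) \/ exists g', ltG leG g' g /\ FA leG v lt Gb g' f.

(* Main.v *)
Require Import Defs.
From Stdlib Require List.
From Stdlib Require Import Classical.
From mathcomp Require Import all_boot all_order all_algebra zify ring.
Set Implicit Arguments. Unset Strict Implicit. Unset Printing Implicit Defensive.
Import GRing.Theory.
Local Open Scope ring_scope.

Lemma ncsum_cons K n (a : ncp K n) s w : ncsum (a :: s) w = a w + ncsum s w.
Proof. by []. Qed.

Lemma ncsum_cat K n (s1 s2 : seq (ncp K n)) w : ncsum (s1 ++ s2) w = ncsum s1 w + ncsum s2 w.
Proof.
elim: s1 => [|a s IH]; first by rewrite /= /nc0 add0r.
by rewrite cat_cons !ncsum_cons IH addrA.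
Qed.

Lemma ncsum_map_ext K n T (F G : T -> ncp K n) (l : seq T) w :
  (forall x, F x w = G x w) -> ncsum (map F l) w = ncsum (map G l) w.
Proof. move=> H; elim: l => [|a l IH] //; by rewrite map_cons !ncsum_cons IH H. Qed.

Lemma ncmul_ext K n (f f' g g' : ncp K n) : f =1 f' -> g =1 g' -> ncmul f g =1 ncmul f' g'.
Proof. move=> Hf Hg w; rewrite /ncmul; apply: eq_bigr => i _; by rewrite Hf Hg. Qed.

Lemma ncmul_scalel K n c (f g : ncp K n) w : ncmul (ncscale c f) g w = c * ncmul f g w.
Proof. rewrite /ncmul mulr_sumr; apply: eq_bigr => i _; by rewrite /ncscale mulrA. Qed.

Lemma ncmul_scaler K n c (f g : ncp K n) w : ncmul f (ncscale c g) w = c * ncmul f g w.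
Proof. rewrite /ncmul mulr_sumr; apply: eq_bigr => i _; by rewrite /ncscale mulrCA. Qed.

Lemma ncmul0r K n (g : ncp K n) w : ncmul (@nc0 K n) g w = 0.
Proof. rewrite /ncmul big1 // => i _; by rewrite /nc0 mul0r. Qed.

Lemma ncmulr0 K n (g : ncp K n) w : ncmul g (@nc0 K n) w = 0.
Proof. rewrite /ncmul big1 // => i _; by rewrite /nc0 mulr0. Qed.

Lemma ncmul_addl K n (f h g : ncp K n) w : ncmul (ncadd f h) g w = ncmul f g w + ncmul h g w.
Proof. rewrite /ncmul -big_split; apply: eq_bigr => i _; by rewrite /ncadd mulrDl. Qed.

Lemma ncmul_addr K n (f h g : ncp K n) w : ncmul g (ncadd f h) w = ncmul g f w + ncmul g h w.
Proof. rewrite /ncmul -big_split; apply: eq_bigr => i _; by rewrite /ncadd mulrDr. Qed.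

Lemma ncmul_sumr K n (p : ncp K n) s w : ncmul p (ncsum s) w = ncsum (map (ncmul p) s) w.
Proof.
elim: s w => [|a s IH] w; first by rewrite ncmulr0.
by rewrite map_cons ncsum_cons -IH -ncmul_addr.
Qed.

Lemma ncmul_suml K n (p : ncp K n) s w : ncmul (ncsum s) p w = ncsum (map (fun x => ncmul x p) s) w.
Proof.
elim: s w => [|a s IH] w; first by rewrite ncmul0r.
by rewrite map_cons ncsum_cons -IH -ncmul_addl.
Qed.

Lemma ncmul_neq0 K n (f g : ncp K n) w : ncmul f g w != 0 ->
  exists i, f (take i w) != 0 /\ g (drop i w) != 0.
Proof.
rewrite /ncmul.
case: (pickP (fun i : 'I_(size w).+1 => (f (take i w) != 0) && (g (drop i w) != 0))) =>
  [i /andP[H1 H2]|H0] H; first by exists i.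
move: H; rewrite big1 ?eqxx // => i _.
move: (H0 i) => /negbT; rewrite negb_and !negbK => /orP[]/eqP->; by rewrite ?mul0r ?mulr0.
Qed.

Lemma ncmul_monoL_cat K n (a u : word n) (f : ncp K n) : ncmul (ncmono K a) f (a ++ u) = f u.
Proof.
have Hs : (size a < (size (a ++ u)).+1)%N by rewrite size_cat ltnS leq_addr.
rewrite /ncmul (bigD1 (Ordinal Hs)) //= /ncmono take_size_cat // drop_size_cat // eqxx mul1r.
rewrite big1 ?addr0 // => i /eqP Hi.
case: ifP; rewrite ?mul0r // => /eqP Ht; exfalso; apply: Hi; apply: val_inj => /=.
have H1 := ltn_ord i; have H2 := congr1 size Ht; move: H1 H2; move: (nat_of_ord i) => k.
rewrite size_take_min size_cat ltnS => /minn_idPl ->; done.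
Qed.

Lemma ncmul_monoR_cat K n (b u : word n) (f : ncp K n) : ncmul f (ncmono K b) (u ++ b) = f u.
Proof.
have Hs : (size u < (size (u ++ b)).+1)%N by rewrite size_cat ltnS leq_addr.
rewrite /ncmul (bigD1 (Ordinal Hs)) //= /ncmono take_size_cat // drop_size_cat // eqxx mulr1.
rewrite big1 ?addr0 // => i /eqP Hi.
case: ifP; rewrite ?mulr0 // => /eqP Ht; exfalso; apply: Hi; apply: val_inj => /=.
have H1 := ltn_ord i; have H2 := congr1 size Ht; move: H1 H2; move: (nat_of_ord i) => k.
rewrite size_drop size_cat.
move=> H1 H2; clear -H1 H2; move: H1 H2; move: (size u) (size b) => x y; lia.
Qed.

Lemma ncmul_monoL_neq0 K n (a w : word n) (f : ncp K n) : ncmul (ncmono K a) f w != 0 ->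
  exists u, w = a ++ u /\ f u != 0.
Proof.
move=> /ncmul_neq0 [i [H1 H2]]; exists (drop i w); split => //.
move: H1; rewrite /ncmono; case: ifP => [/eqP <- _|]; rewrite ?eqxx //.
by rewrite cat_take_drop.
Qed.

Lemma ncmul_monoR_neq0 K n (b w : word n) (f : ncp K n) : ncmul f (ncmono K b) w != 0 ->
  exists u, w = u ++ b /\ f u != 0.
Proof.
move=> /ncmul_neq0 [i [H1 H2]]; exists (take i w); split => //.
move: H2; rewrite /ncmono; case: ifP => [/eqP <- _|]; rewrite ?eqxx //.
by rewrite cat_take_drop.
Qed.

Lemma shift_sum (K : fieldType) (G : nat -> K) j m : (j <= m)%N ->
  \sum_(k < (m - j).+1) G k = \sum_(i < m.+1) (if (j <= i)%N then G (i - j)%N else 0).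
Proof.
elim: j m => [|j IH] m Hjm.
  by rewrite subn0; apply: eq_bigr => i _; rewrite subn0.
case: m Hjm => [//|m] Hjm.
rewrite [in RHS]big_ord_recl /= add0r subSS IH //.
Qed.

Lemma ncmulA K n (f g h : ncp K n) w : ncmul (ncmul f g) h w = ncmul f (ncmul g h) w.
Proof.
pose T (i j : nat) := if (j <= i)%N then f (take j w) * g (take (i - j) (drop j w)) * h (drop i w) else 0.
transitivity (\sum_(i < (size w).+1) \sum_(j < (size w).+1) T i j).
  rewrite /ncmul; apply: eq_bigr => i _.
  have Hi : (i <= size w)%N by rewrite -ltnS.
  rewrite mulr_suml.
  rewrite (big_ord_widen (size w).+1 (fun j => f (take j (take i w)) * g (drop j (take i w)) * h (drop i w)));
    last by rewrite ltnS size_take_min geq_minr.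
  rewrite big_mkcond; apply: eq_bigr => j _.
  rewrite /T size_takel // ltnS.
  case: ifP => // Hji.
  by rewrite take_takel // take_drop subnK.
rewrite exchange_big /ncmul; apply: eq_bigr => j _.
have Hj : (j <= size w)%N by rewrite -ltnS.
rewrite mulr_sumr size_drop.
rewrite (shift_sum (fun k => f (take j w) * (g (take k (drop j w)) * h (drop k (drop j w))))) //.
apply: eq_bigr => i _; rewrite /T; case: ifP => // Hji.
by rewrite drop_drop subnK // mulrA.
Qed.

Lemma finsupp_ext K n (f g : ncp K n) : f =1 g -> finsupp f -> finsupp g.
Proof. move=> H [s Hs]; exists s => w; rewrite -H; exact: Hs. Qed.

Lemma finsupp0 (K : fieldType) n : finsupp (@nc0 K n).
Proof. by exists [::] => w; rewrite /nc0 eqxx. Qed.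

Lemma finsupp_mono (K : fieldType) n (a : word n) : finsupp (ncmono K a).
Proof. exists [:: a] => w; rewrite /ncmono; case: ifP => [/eqP ->|]; by rewrite ?eqxx ?inE. Qed.

Lemma finsupp_C (K : fieldType) n (c : K) : finsupp (@ncC K n c).
Proof. exists [:: [::]] => w; rewrite /ncC; case: ifP => [/eqP ->|]; by rewrite ?eqxx ?inE. Qed.

Lemma finsupp_1 (K : fieldType) n : finsupp (@nc1 K n).
Proof. exists [:: [::]] => w; rewrite /nc1; case: ifP => [/eqP ->|]; by rewrite ?eqxx ?inE. Qed.

Lemma finsupp_add K n (f g : ncp K n) : finsupp f -> finsupp g -> finsupp (ncadd f g).
Proof.
move=> [s1 H1] [s2 H2]; exists (s1 ++ s2) => w; rewrite mem_cat /ncadd => H.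
case E: (f w == 0); last by rewrite H1 ?E.
by rewrite (eqP E) add0r in H; rewrite H2 ?orbT.
Qed.

Lemma finsupp_scale K n c (f : ncp K n) : finsupp f -> finsupp (ncscale c f).
Proof.
move=> [s H]; exists s => w; rewrite /ncscale => Hw; apply: H.
by apply: contraNneq Hw => ->; rewrite mulr0.
Qed.

Lemma finsupp_sub K n (f g : ncp K n) : finsupp f -> finsupp g -> finsupp (ncsub f g).
Proof.
move=> Hf Hg; apply: (@finsupp_ext _ _ (ncadd f (ncscale (-1) g))).
  by move=> w; rewrite /ncadd /ncsub /ncscale mulN1r.
by apply: finsupp_add => //; apply: finsupp_scale.
Qed.

Lemma finsupp_sum K n (s : seq (ncp K n)) : (forall f, List.In f s -> finsupp f) -> finsupp (ncsum s).
Proof.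
elim: s => [|a s IH] H; first exact: finsupp0.
apply: finsupp_add; first by apply: H; left.
by apply: IH => f Hf; apply: H; right.
Qed.

Lemma finsupp_mul K n (f g : ncp K n) : finsupp f -> finsupp g -> finsupp (ncmul f g).
Proof.
move=> [s1 H1] [s2 H2]; exists [seq x ++ y | x <- s1, y <- s2] => w /ncmul_neq0 [i [Ha Hb]].
rewrite -(cat_take_drop i w); apply: allpairs_f; [exact: H1|exact: H2].
Qed.

Lemma I_ext K n (Gb : ncp K n -> Prop) (f h : ncp K n) : f =1 h -> ideal_gen Gb f -> ideal_gen Gb h.
Proof. move=> H [l [Hl Hw]]; exists l; split => // w; by rewrite -H. Qed.

Lemma I0 K n (Gb : ncp K n -> Prop) (f : ncp K n) : f =1 @nc0 K n -> ideal_gen Gb f.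
Proof. move=> H; exists [::]; split => // w; by rewrite H. Qed.

Lemma I_add K n (Gb : ncp K n -> Prop) (f h : ncp K n) :
  ideal_gen Gb f -> ideal_gen Gb h -> ideal_gen Gb (ncadd f h).
Proof.
move=> [l1 [Hl1 Hw1]] [l2 [Hl2 Hw2]]; exists (l1 ++ l2); split.
  by move=> t Ht; case: (List.in_app_or _ _ _ Ht) => ?; [apply: Hl1|apply: Hl2].
by move=> w; rewrite map_cat ncsum_cat /ncadd Hw1 Hw2.
Qed.

Lemma I_scale K n (Gb : ncp K n -> Prop) c (f : ncp K n) :
  ideal_gen Gb f -> ideal_gen Gb (ncscale c f).
Proof.
move=> [l [Hl Hw]]; exists [seq (ncscale c t.1.1, t.1.2, t.2) | t <- l]; split.
  move=> t Ht; apply List.in_map_iff in Ht; destruct Ht as [t' [<- Ht']] => /=; have [? ? ?] := Hl t' Ht'.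
  by split => //; apply: finsupp_scale.
move=> w; rewrite [LHS]/ncscale Hw -map_comp; elim: l {Hl Hw} => [|t l IH].
  by rewrite /= /nc0 mulr0.
rewrite !map_cons !ncsum_cons -IH mulrDr; congr (_ + _).
rewrite /= -ncmul_scalel; apply: ncmul_ext => // u; by rewrite ncmul_scalel.
Qed.

Lemma I_sub K n (Gb : ncp K n -> Prop) (f h : ncp K n) :
  ideal_gen Gb f -> ideal_gen Gb h -> ideal_gen Gb (ncsub f h).
Proof.
move=> Hf Hh; apply: (@I_ext _ _ _ (ncadd f (ncscale (-1) h))).
  by move=> w; rewrite /ncadd /ncsub /ncscale mulN1r.
by apply: I_add => //; apply: I_scale.
Qed.

Lemma I_mull K n (Gb : ncp K n -> Prop) (p f : ncp K n) :
  finsupp p -> ideal_gen Gb f -> ideal_gen Gb (ncmul p f).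
Proof.
move=> Hp [l [Hl Hw]]; exists [seq (ncmul p t.1.1, t.1.2, t.2) | t <- l]; split.
  move=> t Ht; apply List.in_map_iff in Ht; destruct Ht as [t' [<- Ht']] => /=; have [? ? ?] := Hl t' Ht'.
  by split => //; apply: finsupp_mul.
move=> w; rewrite (ncmul_ext (f' := p) (g' := ncsum [seq ncmul (ncmul t.1.1 t.1.2) t.2 | t <- l])) //.
rewrite ncmul_sumr -!map_comp; apply: ncsum_map_ext => t /=.
rewrite -ncmulA; apply: ncmul_ext => // u; by rewrite ncmulA.
Qed.

Lemma I_mulr K n (Gb : ncp K n -> Prop) (p f : ncp K n) :
  finsupp p -> ideal_gen Gb f -> ideal_gen Gb (ncmul f p).
Proof.
move=> Hp [l [Hl Hw]]; exists [seq (t.1.1, t.1.2, ncmul t.2 p) | t <- l]; split.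
  move=> t Ht; apply List.in_map_iff in Ht; destruct Ht as [t' [<- Ht']] => /=; have [? ? ?] := Hl t' Ht'.
  by split => //; apply: finsupp_mul.
move=> w; rewrite (ncmul_ext (f' := ncsum [seq ncmul (ncmul t.1.1 t.1.2) t.2 | t <- l]) (g' := p)) //.
rewrite ncmul_suml -!map_comp; apply: ncsum_map_ext => t /=.
by rewrite ncmulA.
Qed.

Lemma congI_refl K n (Gb : ncp K n -> Prop) f : congI Gb f f.
Proof. apply: I0 => w; by rewrite /ncsub subrr. Qed.

Lemma congI_ext K n (Gb : ncp K n -> Prop) f f' h h' :
  f =1 f' -> h =1 h' -> congI Gb f h -> congI Gb f' h'.
Proof. move=> Hf Hh; apply: I_ext => w; by rewrite /ncsub Hf Hh. Qed.

Lemma congI_sym K n (Gb : ncp K n -> Prop) f h : congI Gb f h -> congI Gb h f.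
Proof.
move=> H; apply: (I_ext _ (I_scale (-1) H)) => w.
by rewrite /ncscale /ncsub mulN1r opprB.
Qed.

Lemma congI_trans K n (Gb : ncp K n -> Prop) f g h : congI Gb f g -> congI Gb g h -> congI Gb f h.
Proof.
move=> H1 H2; apply: (I_ext _ (I_add H1 H2)) => w.
by rewrite /ncadd /ncsub addrA subrK.
Qed.

Lemma congI_mul K n (Gb : ncp K n -> Prop) f f' h h' :
  finsupp f' -> finsupp h -> congI Gb f f' -> congI Gb h h' -> congI Gb (ncmul f h) (ncmul f' h').
Proof.
move=> Hf' Hh H1 H2.
apply: (I_ext _ (I_add (I_mulr Hh H1) (I_mull Hf' H2))) => w.
rewrite /ncadd /ncsub.
have E1 : ncmul (fun w => f w - f' w) h w = ncmul f h w - ncmul f' h w.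
  rewrite /ncmul -sumrB; apply: eq_bigr => i _; by rewrite mulrBl.
have E2 : ncmul f' (fun w => h w - h' w) w = ncmul f' h w - ncmul f' h' w.
  rewrite /ncmul -sumrB; apply: eq_bigr => i _; by rewrite mulrBr.
by rewrite E1 E2 addrA subrK.
Qed.

Lemma og_refl (G : zmodType) (leG : rel G) : ordered_group leG -> forall a, leG a a.
Proof. by case. Qed.
Lemma og_anti (G : zmodType) (leG : rel G) : ordered_group leG -> forall a b, leG a b -> leG b a -> a = b.
Proof. by case. Qed.
Lemma og_trans (G : zmodType) (leG : rel G) : ordered_group leG -> forall a b c, leG a b -> leG b c -> leG a c.
Proof. by case. Qed.
Lemma og_total (G : zmodType) (leG : rel G) : ordered_group leG -> forall a b, leG a b \/ leG b a.
Proof. by case. Qed.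
Lemma og_addr (G : zmodType) (leG : rel G) : ordered_group leG -> forall a b c, leG a b -> leG (a + c) (b + c).
Proof. by case. Qed.
Lemma og_addl (G : zmodType) (leG : rel G) : ordered_group leG -> forall a b c, leG a b -> leG (c + a) (c + b).
Proof. move=> HG a b c H; rewrite (addrC c) (addrC c); exact: og_addr. Qed.
Lemma og_add2 (G : zmodType) (leG : rel G) : ordered_group leG -> forall a b c d,
  leG a b -> leG c d -> leG (a + c) (b + d).
Proof.
move=> HG a b c d H1 H2; apply: (og_trans HG (b := b + c)); [exact: og_addr|exact: og_addl].
Qed.
Lemma og_opp (G : zmodType) (leG : rel G) : ordered_group leG -> forall a b, leG a b -> leG (- b) (- a).
Proof.
move=> HG a b H; have := og_addr HG (- a - b) H.
have -> : a + (- a - b) = - b by rewrite addrA subrr add0r.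
have -> : b + (- a - b) = - a by rewrite addrC -addrA addNr addr0.
done.
Qed.
Lemma og_opp_iff (G : zmodType) (leG : rel G) : ordered_group leG -> forall a b, leG (- b) (- a) -> leG a b.
Proof. move=> HG a b /(og_opp HG); by rewrite !opprK. Qed.

Lemma leGi_trans (G : zmodType) (leG : rel G) : ordered_group leG -> forall x y z,
  leGi leG x y -> leGi leG y z -> leGi leG x z.
Proof.
move=> HG [a|] [b|] [c|] //=; exact: og_trans.
Qed.

Lemma v0 (K : fieldType) (G : zmodType) (leG : rel G) (v : K -> option G) : valuation leG v -> v (0 : K) = None.
Proof. by case=> H _ _ _; apply/H. Qed.

Lemma vnz (K : fieldType) (G : zmodType) (leG : rel G) (v : K -> option G) : valuation leG v -> forall c : K, c != 0 ->
  exists a, v c = Some a.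
Proof.
case=> H _ _ _ c Hc; case E: (v c) => [a|]; first by exists a.
by move/H: E => E; rewrite E eqxx in Hc.
Qed.

Lemma v_None (K : fieldType) (G : zmodType) (leG : rel G) (v : K -> option G) : valuation leG v -> forall c : K,
  v c = None -> c = 0.
Proof. by case=> H _ _ _ c /H. Qed.

Lemma vM (K : fieldType) (G : zmodType) (leG : rel G) (v : K -> option G) : valuation leG v -> forall a b : K,
  v (a * b) = addGi (v a) (v b).
Proof. by case. Qed.

Lemma v1 (K : fieldType) (G : zmodType) (leG : rel G) (v : K -> option G) : valuation leG v -> v (1 : K) = Some 0.
Proof.
move=> Hv; have [a Ha] := vnz Hv (oner_neq0 K).
have := vM Hv 1 1; rewrite mulr1 Ha /= => [[]] E.
congr Some; apply: (addrI a); rewrite addr0; exact: esym E.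
Qed.

Lemma vN1 (K : fieldType) (G : zmodType) (leG : rel G) (v : K -> option G) : ordered_group leG -> valuation leG v ->
  v (-1 : K) = Some 0.
Proof.
move=> HG Hv; have Hn1 : (-1 : K) != 0 by rewrite oppr_eq0 oner_neq0.
have [b Hb] := vnz Hv Hn1.
rewrite Hb; have := vM Hv (-1) (-1); rewrite mulrNN mulr1 (v1 Hv) Hb /= => [[]] Hbb.
case: (og_total HG 0 b) => H.
  have := og_addr HG b H; rewrite add0r -Hbb => H'; by rewrite (og_anti HG H H').
have := og_addr HG b H; rewrite add0r -Hbb => H'; by rewrite (og_anti HG H' H).
Qed.

Lemma vN (K : fieldType) (G : zmodType) (leG : rel G) (v : K -> option G) : ordered_group leG -> valuation leG v ->
  forall c : K, v (- c) = v c.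
Proof.
move=> HG Hv c; rewrite -mulN1r (vM Hv) (vN1 HG Hv); case: (v c) => //= a; by rewrite add0r.
Qed.

Lemma v_add (K : fieldType) (G : zmodType) (leG : rel G) (v : K -> option G) : ordered_group leG -> valuation leG v ->
  forall x (c d : K), leGi leG x (v c) -> leGi leG x (v d) -> leGi leG x (v (c + d)).
Proof.
move=> HG [_ _ H _] x c d Hc Hd; case: (H c d) => H'; [exact: (leGi_trans HG Hc H')|exact: (leGi_trans HG Hd H')].
Qed.

Definition Sclosed (K : fieldType) (G : zmodType) (leG : rel G) (v : K -> option G) (S : K -> Prop) :=
  [/\ S 0, (forall x y, S x -> S y -> S (x + y)), (forall x, S x -> S (- x))
    & (forall a x, in_Ov leG v a -> S x -> S (a * x))].

Lemma FK_closed (K : fieldType) (G : zmodType) (leG : rel G) (v : K -> option G) : ordered_group leG -> valuation leG v ->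
  forall g, Sclosed leG v (FK leG v g).
Proof.
move=> HG Hv g; split.
- by rewrite /FK (v0 Hv).
- move=> x y; exact: v_add.
- by move=> x; rewrite /FK (vN HG Hv).
- move=> a x; rewrite /in_Ov /FK (vM Hv); case: (v a) => [a'|] //=; case: (v x) => [x'|] //=.
  by move=> Ha Hx; rewrite -(add0r (-g)); apply: og_add2.
Qed.

Lemma True_closed (K : fieldType) (G : zmodType) (leG : rel G) (v : K -> option G) :
  Sclosed leG v (fun _ => True).
Proof. by []. Qed.

Lemma FK_mul (K : fieldType) (G : zmodType) (leG : rel G) (v : K -> option G) : ordered_group leG -> valuation leG v ->
  forall g1 g2 (c d : K), FK leG v g1 c -> FK leG v g2 d -> FK leG v (g1 + g2) (c * d).
Proof.
move=> HG Hv g1 g2 c d; rewrite /FK (vM Hv); case: (v c) => [c'|] //=; case: (v d) => [d'|] //=.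
by move=> Hc Hd; rewrite opprD; apply: og_add2.
Qed.

Lemma FK_mono (K : fieldType) (G : zmodType) (leG : rel G) (v : K -> option G) : ordered_group leG ->
  forall g1 g2 (c : K), leG g1 g2 -> FK leG v g1 c -> FK leG v g2 c.
Proof.
move=> HG g1 g2 c H; rewrite /FK; case: (v c) => [c'|] //=.
by move=> H'; apply: (og_trans HG (og_opp HG H) H').
Qed.

Lemma FK0_Ov (K : fieldType) (G : zmodType) (leG : rel G) (v : K -> option G) (c : K) :
  FK leG v 0 c <-> in_Ov leG v c.
Proof. by rewrite /FK /in_Ov oppr0. Qed.

Lemma Ov_closed (K : fieldType) (G : zmodType) (leG : rel G) (v : K -> option G) : ordered_group leG -> valuation leG v ->
  Sclosed leG v (in_Ov leG v).
Proof.
move=> HG Hv; have [H0 Ha Hn Hm] := FK_closed HG Hv 0.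
split.
- exact/FK0_Ov.
- move=> x y Hx Hy; apply/FK0_Ov; apply: Ha; exact: (iffRL (FK0_Ov _ _ _)).
- move=> x Hx; apply/FK0_Ov; apply: Hn; exact: (iffRL (FK0_Ov _ _ _)).
- move=> a x H Hx; apply/FK0_Ov; apply: Hm => //; exact: (iffRL (FK0_Ov _ _ _)).
Qed.

Lemma mv_closed (K : fieldType) (G : zmodType) (leG : rel G) (v : K -> option G) : ordered_group leG -> valuation leG v ->
  Sclosed leG v (in_mv leG v).
Proof.
move=> HG Hv; split.
- by rewrite /in_mv (v0 Hv).
- move=> x y [Hx Hx'] [Hy Hy']; split; first exact: v_add.
  case: Hv => _ _ Hv3 _; case: (Hv3 x y) => H E; rewrite E in H.
  + move: Hx Hx' H; case: (v x) => [a|] //= H1 H2 H3; apply: H2; congr Some; exact: (og_anti HG H3 H1).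
  + move: Hy Hy' H; case: (v y) => [a|] //= H1 H2 H3; apply: H2; congr Some; exact: (og_anti HG H3 H1).
- by move=> x; rewrite /in_mv (vN HG Hv).
- move=> a x Ha [Hx Hx']; rewrite /in_mv (vM Hv); move: Ha Hx Hx'; rewrite /in_Ov.
  case: (v a) => [a'|] //=; case: (v x) => [x'|] //= H1 H2 H3; split.
    by rewrite -(add0r 0); apply: og_add2.
  move=> [] E; apply: H3; congr Some; apply: (og_anti HG _ H2).
  have := og_addr HG x' H1; rewrite add0r E //.
Qed.

Lemma mv_Ov (K : fieldType) (G : zmodType) (leG : rel G) (v : K -> option G) (c : K) : in_mv leG v c -> in_Ov leG v c.
Proof. by case. Qed.

Lemma Ov1 (K : fieldType) (G : zmodType) (leG : rel G) (v : K -> option G) : ordered_group leG -> valuation leG v ->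
  in_Ov leG v (1 : K).
Proof. move=> HG Hv; rewrite /in_Ov (v1 Hv) /=; exact: og_refl. Qed.

Lemma Sclosed_mul1 (K : fieldType) (G : zmodType) (leG : rel G) (v : K -> option G) S : ordered_group leG -> valuation leG v ->
  Sclosed leG v S -> forall (x : K), S x -> S (x * 1) /\ S (x * 0).
Proof. by move=> HG Hv [H0 _ _ _] x Hx; rewrite mulr1 mulr0. Qed.

Definition nf (K : fieldType) n (l : seq (K * word n)) : ncp K n :=
  ncsum [seq ncscale t.1 (ncmono K t.2) | t <- l].

Definition idealS (K : fieldType) n (S : K -> Prop) (Gb : ncp K n -> Prop) (f : ncp K n) : Prop :=
  exists l : seq (K * word n * ncp K n * word n),
   (forall t, List.In t l -> S t.1.1.1 /\ Gb t.1.2) /\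
   forall w, f w = ncsum [seq ncmul (ncmul (ncscale t.1.1.1 (ncmono K t.1.1.2)) t.1.2) (ncmono K t.2) | t <- l] w.

Lemma In_mem (T : eqType) (x : T) s : List.In x s -> x \in s.
Proof. elim: s => [|y s IH] //= [->|H]; rewrite inE ?eqxx //; by rewrite IH ?orbT. Qed.

Lemma nf_cons (K : fieldType) n (t : K * word n) l w :
  nf (t :: l) w = t.1 * (if w == t.2 then 1 else 0) + nf l w.
Proof. by []. Qed.

Lemma nf_nil (K : fieldType) n w : nf ([::] : seq (K * word n)) w = 0.
Proof. by []. Qed.

Lemma nf_cat (K : fieldType) n (l1 l2 : seq (K * word n)) w : nf (l1 ++ l2) w = nf l1 w + nf l2 w.
Proof. by rewrite /nf map_cat ncsum_cat. Qed.

Lemma nf_neg (K : fieldType) n (l : seq (K * word n)) w :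
  nf [seq (- t.1, t.2) | t <- l] w = - nf l w.
Proof.
elim: l => [|t l IH]; first by rewrite /= nf_nil oppr0.
by rewrite map_cons !nf_cons IH opprD mulNr.
Qed.

Lemma nf_supp (K : fieldType) n (l : seq (K * word n)) w :
  nf l w != 0 -> exists t, List.In t l /\ t.2 = w.
Proof.
elim: l => [|t l IH]; first by rewrite nf_nil eqxx.
rewrite nf_cons; case: (eqVneq w t.2) => [E|_] H; first by exists t; split => //; left.
rewrite mulr0 add0r in H; have [t' [H1 H2]] := IH H; exists t'; split => //; by right.
Qed.

Lemma finsupp_nf (K : fieldType) n (l : seq (K * word n)) : finsupp (nf l).
Proof.
exists [seq t.2 | t <- l] => w /nf_supp [t [Ht <-]]; apply: map_f; exact: In_mem.
Qed.

Lemma nf_S (K : fieldType) (G : zmodType) (leG : rel G) (v : K -> option G) S n (l : seq (K * word n)) :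
  Sclosed leG v S -> (forall t, List.In t l -> S t.1) -> forall w, S (nf l w).
Proof.
move=> [H0 Ha Hn Hm] Hl w; elim: l Hl => [|t l IH] Hl; first by rewrite nf_nil.
rewrite nf_cons; apply: Ha; last by apply: IH => t' Ht'; apply: Hl; right.
have Ht : S t.1 by apply: Hl; left.
by case: ifP; rewrite ?mulr1 ?mulr0.
Qed.

Lemma idealS_gen (K : fieldType) n (S : K -> Prop) (Gb : ncp K n -> Prop) f :
  (forall g, Gb g -> finsupp g) -> idealS S Gb f -> ideal_gen Gb f.
Proof.
move=> HGb [l [Hl Hw]].
exists [seq (ncscale t.1.1.1 (ncmono K t.1.1.2), t.1.2, ncmono K t.2) | t <- l]; split.
  move=> t Ht; apply List.in_map_iff in Ht; destruct Ht as [t' [<- Ht']] => /=.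
  have [_ Hg] := Hl t' Ht'; split; [apply: finsupp_scale; apply: finsupp_mono|exact: Hg|exact: finsupp_mono].
by move=> w; rewrite Hw -map_comp.
Qed.

Lemma idealS_Ov (K : fieldType) (G : zmodType) (leG : rel G) (v : K -> option G) n (Gb : ncp K n -> Prop) f :
  ordered_group leG -> valuation leG v ->
  (forall g, Gb g -> finsupp g) -> idealS (in_Ov leG v) Gb f -> ideal_gen_Ov leG v Gb f.
Proof.
move=> HG Hv HGb [l [Hl Hw]].
have Ovmono : forall a : word n, ncOv leG v (ncmono K a).
  move=> a; split; first exact: finsupp_mono.
  move=> w; rewrite /ncmono; case: ifP => _; first exact: Ov1.
  by rewrite /in_Ov (v0 Hv).
exists [seq (ncscale t.1.1.1 (ncmono K t.1.1.2), t.1.2, ncmono K t.2) | t <- l]; split.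
  move=> t Ht; apply List.in_map_iff in Ht; destruct Ht as [t' [<- Ht']] => /=.
  have [Hc Hg] := Hl t' Ht'; split => //.
  split; first by apply: finsupp_scale; apply: finsupp_mono.
  move=> w; rewrite /ncscale; have [_ _ _ Hm] := Ov_closed HG Hv.
  rewrite mulrC; apply: Hm => //; exact: (Ovmono _).2.
by move=> w; rewrite Hw -map_comp.
Qed.

Lemma idealS_ext (K : fieldType) n (S : K -> Prop) (Gb : ncp K n -> Prop) f h :
  f =1 h -> idealS S Gb f -> idealS S Gb h.
Proof. move=> H [l [Hl Hw]]; exists l; split => // w; by rewrite -H. Qed.

Lemma idealS_add (K : fieldType) n (S : K -> Prop) (Gb : ncp K n -> Prop) f h :
  idealS S Gb f -> idealS S Gb h -> idealS S Gb (ncadd f h).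
Proof.
move=> [l1 [Hl1 Hw1]] [l2 [Hl2 Hw2]]; exists (l1 ++ l2); split.
  by move=> t Ht; case: (List.in_app_or _ _ _ Ht) => ?; [apply: Hl1|apply: Hl2].
by move=> w; rewrite map_cat ncsum_cat /ncadd Hw1 Hw2.
Qed.

Definition strict_total n (lt : rel (word n)) :=
  [/\ (forall u, ~~ lt u u), (forall u v w, lt u v -> lt v w -> lt u w)
    & (forall u v, u != v -> lt u v || lt v u)].

Lemma mo_st n (lt : rel (word n)) : monomial_ordering lt -> strict_total lt.
Proof. by case=> [[]]. Qed.

Lemma leW_trans n (lt : rel (word n)) : strict_total lt -> forall u v w,
  leW lt u v -> leW lt v w -> leW lt u w.
Proof.
move=> [Hirr Htr Htot] u v w /orP[/eqP ->|H1] // /orP[/eqP <-|H2]; rewrite /leW ?H1 ?orbT //.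
by rewrite (Htr _ _ _ H1 H2) orbT.
Qed.

Lemma leW_lt n (lt : rel (word n)) : strict_total lt -> forall u v,
  leW lt u v -> u != v -> lt u v.
Proof. move=> _ u v /orP[/eqP ->|//]; by rewrite eqxx. Qed.

Lemma leW_anti n (lt : rel (word n)) : strict_total lt -> forall u v,
  leW lt u v -> leW lt v u -> u = v.
Proof.
move=> [Hirr Htr _] u v /orP[/eqP //|H1] /orP[/eqP //|H2].
by have := Hirr u; rewrite (Htr _ _ _ H1 H2).
Qed.

Lemma max_exists n (lt : rel (word n)) (P : word n -> Prop) (s : seq (word n)) :
  strict_total lt -> (forall u, P u -> u \in s) -> (exists u, P u) ->
  exists m, P m /\ forall u, P u -> leW lt u m.
Proof.
move=> Hst; have [Hirr Htr Htot] := Hst.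
elim: s P => [|x s IH] P HP [u0 Pu0]; first by have := HP u0 Pu0.
case: (classic (exists u, P u /\ u != x)) => [Hex|Hnex].
  have HP' : forall u, P u /\ u != x -> u \in s.
    move=> u [Pu Hux]; move: (HP u Pu); by rewrite inE (negbTE Hux).
  have [m [[Pm Hmx] Hmax]] := IH (fun u => P u /\ u != x) HP' Hex.
  case: (classic (P x)) => Px.
    have Hxm' : x != m by rewrite eq_sym.
    case/orP: (Htot x m Hxm') => Hxm.
      exists m; split => // u Pu; case: (eqVneq u x) => [->|Hux]; first by rewrite /leW Hxm orbT.
      exact: Hmax.
    exists x; split => // u Pu; case: (eqVneq u x) => [->|Hux]; first by rewrite /leW eqxx.
    apply: (leW_trans Hst (Hmax u (conj Pu Hux))); by rewrite /leW Hxm orbT.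
  exists m; split => // u Pu; apply: Hmax; split => //.
  by apply/eqP => E; apply: Px; rewrite -E.
have Hx : forall u, P u -> u = x.
  move=> u Pu; case: (eqVneq u x) => // Hux; exfalso; apply: Hnex; by exists u.
exists x; split; first by rewrite -(Hx u0 Pu0).
by move=> u /Hx ->; rewrite /leW eqxx.
Qed.

Lemma LM_exists (K : fieldType) n (lt : rel (word n)) (f : ncp K n) :
  strict_total lt -> finsupp f -> (exists w, f w != 0) -> exists m, is_LM lt f m.
Proof.
move=> Hst [s Hs] Hex; have [m [Hm Hmax]] := max_exists (P := fun w => f w != 0) Hst Hs Hex.
by exists m.
Qed.

Lemma nf_unique (K : fieldType) n (lt : rel (word n)) (Gb : ncp K n -> Prop) (l : seq (K * word n)) :
  strict_total lt -> monic_GB lt Gb (ideal_gen Gb) ->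
  (forall t, List.In t l -> inN lt Gb t.2) -> ideal_gen Gb (nf l) -> forall w, nf l w = 0.
Proof.
move=> Hst [_ HGB] Hl HI w; apply/eqP; apply: contraT => Hw.
have [m Hm] := LM_exists Hst (finsupp_nf l) (ex_intro _ w Hw).
have [g [u [Hg Hu Hinf]]] := HGB _ _ (finsupp_nf l) HI Hm.
have [t [Ht Htm]] := nf_supp (proj1 Hm).
have := Hl t Ht g u Hg Hu; by rewrite Htm Hinf.
Qed.

Lemma nf_unique2 (K : fieldType) n (lt : rel (word n)) (Gb : ncp K n -> Prop) (l1 l2 : seq (K * word n)) :
  strict_total lt -> monic_GB lt Gb (ideal_gen Gb) ->
  (forall t, List.In t l1 -> inN lt Gb t.2) -> (forall t, List.In t l2 -> inN lt Gb t.2) ->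
  congI Gb (nf l1) (nf l2) -> forall w, nf l1 w = nf l2 w.
Proof.
move=> Hst HGB H1 H2 HI w.
have E : forall w, ncsub (nf l1) (nf l2) w = nf (l1 ++ [seq (- t.1, t.2) | t <- l2]) w.
  by move=> w'; rewrite nf_cat nf_neg.
have H3 : forall t, List.In t (l1 ++ [seq (- t.1, t.2) | t <- l2]) -> inN lt Gb t.2.
  move=> t Ht; case: (List.in_app_or _ _ _ Ht) => Ht'; first exact: H1.
  apply List.in_map_iff in Ht'; destruct Ht' as [t' [<- Ht'']]; exact: (H2 t' Ht'').
have := nf_unique Hst HGB H3 (I_ext E HI) w.
rewrite -E /ncsub => /eqP; rewrite subr_eq0 => /eqP; apply.
Qed.

Definition bad (K : fieldType) n (lt : rel (word n)) (Gb : ncp K n -> Prop) (f : ncp K n) (u : word n) : Prop :=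
  f u != 0 /\ ~ inN lt Gb u.

Definition NFgoal (K : fieldType) n (lt : rel (word n)) (Gb : ncp K n -> Prop) (S : K -> Prop) (f : ncp K n) :=
  exists l : seq (K * word n), (forall t, List.In t l -> S t.1 /\ inN lt Gb t.2) /\ idealS S Gb (ncsub f (nf l)).

Lemma nf_map_uniq (K : fieldType) n (f : ncp K n) (r : seq (word n)) w : uniq r ->
  nf [seq (f u, u) | u <- r] w = if w \in r then f w else 0.
Proof.
elim: r => [|x r IH]; first by rewrite nf_nil.
move=> /andP [Hx Hr]; rewrite map_cons nf_cons IH // inE /=.
case: (eqVneq w x) => [->|Hwx] /=; first by rewrite (negbTE Hx) mulr1 addr0.
by rewrite mulr0 add0r.
Qed.

Lemma nf_good (K : fieldType) n (lt : rel (word n)) (Gb : ncp K n -> Prop) (S : K -> Prop) (f : ncp K n) :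
  finsupp f -> (forall w, S (f w)) -> (forall u, f u != 0 -> inN lt Gb u) ->
  exists l, (forall t, List.In t l -> S t.1 /\ inN lt Gb t.2) /\ (forall w, nf l w = f w).
Proof.
move=> [s Hs] HS HN.
exists [seq (f u, u) | u <- [seq u <- undup s | f u != 0]]; split.
  move=> t Ht; apply List.in_map_iff in Ht; destruct Ht as [u [<- Hu]] => /=.
  move: (In_mem Hu); rewrite mem_filter => /andP[Hu1 _]; split => //; exact: HN.
move=> w; rewrite nf_map_uniq; last by apply: filter_uniq; apply: undup_uniq.
rewrite mem_filter mem_undup; case: (eqVneq (f w) 0) => [->|Hw] //.
by rewrite /= Hs.
Qed.

Lemma reduce_step (K : fieldType) (G : zmodType) (leG : rel G) (v : K -> option G) n
  (lt : rel (word n)) (Gb : ncp K n -> Prop) (S : K -> Prop) (f : ncp K n) (m : word n) :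
  ordered_group leG -> valuation leG v -> monomial_ordering lt -> monic_GB lt Gb (ideal_gen Gb) ->
  (forall g, Gb g -> ncOv leG v g) -> Sclosed leG v S ->
  finsupp f -> (forall w, S (f w)) -> bad lt Gb f m -> (forall u, bad lt Gb f u -> leW lt u m) ->
  exists f', [/\ finsupp f', (forall w, S (f' w)), (forall u, bad lt Gb f' u -> lt u m)
                & idealS S Gb (ncsub f f')].
Proof.
move=> HG Hv Hmo HGB HGbOv HS Hf HSf [Hm0 HmN] Hmax.
have Hst := mo_st Hmo; have [[_ _ _ _ Hcomp] _] := Hmo.
have [g [u [Hg Hu Hinf]]] : exists g u, [/\ Gb g, is_LM lt g u & infix u m].
  apply: NNPP => Hno; apply: HmN => g u Hg Hu; apply/negP => Hi; apply: Hno; by exists g, u.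
have [a [b Em]] := infixP Hinf.
have [Hgfs _ [w0 [Hw0 Hg1]]] := HGB.1 g Hg.
have Ew0 : w0 = u := leW_anti Hst (Hu.2 w0 Hw0.1) (Hw0.2 u Hu.1).
have Hgu : g u = 1 by rewrite -Ew0.
pose A := ncmul (ncmul (ncmono K a) g) (ncmono K b).
have A1 : forall x, A (a ++ x ++ b) = g x.
  by move=> x; rewrite /A catA ncmul_monoR_cat ncmul_monoL_cat.
have A2 : forall w, A w != 0 -> exists x, w = a ++ x ++ b /\ g x != 0.
  move=> w /ncmul_monoR_neq0 [y [-> /ncmul_monoL_neq0 [x [-> Hx]]]]; exists x; by rewrite catA.
have AOv : forall w, in_Ov leG v (A w).
  move=> w; case: (eqVneq (A w) 0) => [->|/A2 [x [-> _]]]; first by rewrite /in_Ov (v0 Hv).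
  rewrite A1; exact: (HGbOv g Hg).2.
pose T := ncmul (ncmul (ncscale (f m) (ncmono K a)) g) (ncmono K b).
have ET : forall w, T w = f m * A w.
  move=> w; rewrite /T -ncmul_scalel; apply: ncmul_ext => // y; exact: ncmul_scalel.
have [H0 Ha Hn Hmul] := HS.
exists (ncsub f T); split.
- apply: finsupp_sub => //; apply: finsupp_mul; last exact: finsupp_mono.
  apply: finsupp_mul => //; apply: finsupp_scale; exact: finsupp_mono.
- move=> w; rewrite /ncsub ET; apply: Ha => //; apply: Hn.
  rewrite mulrC; exact: (Hmul _ _ (AOv w) (HSf m)).
- have Efm : ncsub f T m = 0 by rewrite /ncsub ET Em A1 Hgu mulr1 subrr.
  move=> w [Hw HwN].
  have Hwm : w != m by apply: contraNneq Hw => ->; rewrite Efm.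
  apply: (leW_lt Hst _ Hwm).
  case: (eqVneq (f w) 0) => Hfw.
  + have HA : A w != 0 by apply: contraNneq Hw => HA; rewrite /ncsub ET HA Hfw mulr0 subr0.
    have [x [Ew Hx]] := A2 w HA; rewrite Ew Em.
    case/orP: (Hu.2 x Hx) => [/eqP ->|Hlt]; first by rewrite /leW eqxx.
    by rewrite /leW (Hcomp _ _ _ _ Hlt) orbT.
  + exact: (Hmax w (conj Hfw HwN)).
- exists [:: (f m, a, g, b)]; split; first by move=> t [<-|//]; split; [exact: HSf|exact: Hg].
  move=> w; rewrite map_cons ncsum_cons /ncsub /= /nc0 addr0 opprB addrC subrK.
  by [].
Qed.

Lemma NF_exists (K : fieldType) (G : zmodType) (leG : rel G) (v : K -> option G) n
  (lt : rel (word n)) (Gb : ncp K n -> Prop) (S : K -> Prop) :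
  ordered_group leG -> valuation leG v -> monomial_ordering lt -> monic_GB lt Gb (ideal_gen Gb) ->
  (forall g, Gb g -> ncOv leG v g) -> Sclosed leG v S ->
  forall f, finsupp f -> (forall w, S (f w)) -> NFgoal lt Gb S f.
Proof.
move=> HG Hv Hmo HGB HGbOv HS.
have Hst := mo_st Hmo; have [[_ _ _ Hwf _] _] := Hmo.
have good : forall f, finsupp f -> (forall w, S (f w)) -> (forall u, f u != 0 -> inN lt Gb u) ->
    NFgoal lt Gb S f.
  move=> f Hf HSf HN; have [l [Hl El]] := nf_good Hf HSf HN; exists l; split => //.
  exists [::]; split => // w; by rewrite /ncsub El subrr.
have main : forall m f, finsupp f -> (forall w, S (f w)) -> bad lt Gb f m ->
    (forall u, bad lt Gb f u -> leW lt u m) -> NFgoal lt Gb S f.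
  elim/(well_founded_ind Hwf) => m IH f Hf HSf Hbad Hmax.
  have [f' [Hf' HSf' Hlt HI]] := reduce_step HG Hv Hmo HGB HGbOv HS Hf HSf Hbad Hmax.
  have [l [Hl HI']] : NFgoal lt Gb S f'.
    case: (classic (exists u, bad lt Gb f' u)) => [Hex|Hnex].
      have [s Hs] := Hf'.
      have [m' [Hm' Hmax']] := max_exists (P := bad lt Gb f') Hst (fun u Hu => Hs u (proj1 Hu)) Hex.
      exact: (IH m' (Hlt m' Hm') f' Hf' HSf' Hm' Hmax').
    apply: good => // u Hu; apply: NNPP => HN; apply: Hnex; by exists u.
  exists l; split => //; apply: (idealS_ext _ (idealS_add HI HI')) => w.
  by rewrite /ncadd /ncsub addrA subrK.
move=> f Hf HSf.
case: (classic (exists u, bad lt Gb f u)) => [Hex|Hnex].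
  have [s Hs] := Hf.
  have [m [Hm Hmax]] := max_exists (P := bad lt Gb f) Hst (fun u Hu => Hs u (proj1 Hu)) Hex.
  exact: (main m f Hf HSf Hm Hmax).
apply: good => // u Hu; apply: NNPP => HN; apply: Hnex; by exists u.
Qed.

Lemma mem_In (T : eqType) (x : T) s : x \in s -> List.In x s.
Proof. elim: s => [|y s IH] //; rewrite inE => /orP[/eqP ->|/IH]; [by left|by right]. Qed.

Lemma nf_single (K : fieldType) n (c : K) (u : word n) w : nf [:: (c, u)] w = if w == u then c else 0.
Proof. rewrite nf_cons nf_nil addr0; by case: ifP; rewrite ?mulr1 ?mulr0. Qed.

Lemma ncmul_C (K : fieldType) n (a : K) (p : ncp K n) w : ncmul (ncC a) p w = a * p w.
Proof.
rewrite (ncmul_ext (f' := ncscale a (ncmono K [::])) (g' := p)) //.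
  by rewrite ncmul_scalel -[w]cat0s ncmul_monoL_cat.
by move=> u; rewrite /ncC /ncscale /ncmono; case: ifP; rewrite ?mulr1 ?mulr0.
Qed.

Lemma min_exists (K : fieldType) (G : zmodType) (leG : rel G) (v : K -> option G) :
  ordered_group leG -> valuation leG v -> forall s : seq K,
  exists g, (forall c, c \in s -> FK leG v g c) /\
    ((forall c, c \in s -> c = 0) \/ exists c, [/\ c \in s, c != 0 & v c = Some (- g)]).
Proof.
move=> HG Hv.
have FK0 : forall g, FK leG v g 0 by move=> g; case: (FK_closed HG Hv g).
elim => [|c s [g [Hall Hor]]].
  by exists 0; split; [move=> c; rewrite in_nil | left => c; rewrite in_nil].
case: (eqVneq c 0) => [->|Hc].
  exists g; split.
    by move=> x; rewrite inE => /orP[/eqP ->|/Hall].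
  case: Hor => [Hz|[x [Hx Hx0 Hvx]]]; [left|right].
    by move=> x; rewrite inE => /orP[/eqP ->|/Hz].
  by exists x; rewrite inE Hx orbT.
have [a Ha] := vnz Hv Hc.
have Hfc : forall g', leG (- g') a -> FK leG v g' c by move=> g' H; rewrite /FK Ha.
case: Hor => [Hz|[x [Hx Hx0 Hvx]]].
  exists (- a); split; last by right; exists c; rewrite inE eqxx opprK.
  move=> y; rewrite inE => /orP[/eqP ->|/Hz ->]; last exact: FK0.
  by apply: Hfc; rewrite opprK; exact: og_refl.
case: (og_total HG a (- g)) => Hag.
  exists (- a); split; last by right; exists c; rewrite inE eqxx opprK.
  move=> y; rewrite inE => /orP[/eqP ->|/Hall Hy].
    by apply: Hfc; rewrite opprK; exact: og_refl.
  move: Hy; rewrite /FK opprK; case: (v y) => //= b Hb; exact: (og_trans HG Hag Hb).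
exists g; split; last by right; exists x; rewrite inE Hx orbT.
move=> y; rewrite inE => /orP[/eqP ->|/Hall //]; exact: Hfc.
Qed.

Lemma FK_div (K : fieldType) (G : zmodType) (leG : rel G) (v : K -> option G) :
  ordered_group leG -> valuation leG v -> forall g1 g2 (a c : K),
  v a = Some (- g1) -> FK leG v (g1 + g2) c -> FK leG v g2 (c / a).
Proof.
move=> HG Hv g1 g2 a c Ha Hc.
have Ha0 : a != 0 by apply/eqP => Ea; move: Ha; rewrite Ea (v0 Hv).
case: (eqVneq c 0) => [->|Hc0]; first by rewrite mul0r; case: (FK_closed HG Hv g2).
have Hca : c / a != 0 by rewrite mulf_neq0 ?invr_eq0.
have [y Hy] := vnz Hv Hca.
have Ec : c = a * (c / a) by rewrite mulrCA mulfV // mulr1.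
have Hc' : FK leG v (g1 + g2) (a * (c / a)) by rewrite -Ec.
move: Hc'; rewrite /FK (vM Hv) Ha Hy /= => H.
have := og_addl HG g1 H.
have -> : g1 + - (g1 + g2) = - g2 by rewrite opprD addrA subrr add0r.
have -> : g1 + (- g1 + y) = y by rewrite addrA subrr add0r.
done.
Qed.

Lemma FA_intro (K : fieldType) (G : zmodType) (leG : rel G) (v : K -> option G) n (lt : rel (word n))
  (Gb : ncp K n -> Prop) gm f (l : seq (K * word n)) :
  (forall t, List.In t l -> FK leG v gm t.1 /\ inN lt Gb t.2) -> congI Gb f (nf l) -> FA leG v lt Gb gm f.
Proof. by move=> H1 H2; exists l. Qed.

Theorem theorem6p3 (K : fieldType) (Gam : zmodType) (leG : rel Gam)
  (v : K -> option Gam) (n : nat) (lt : rel (word n)) (Gb : ncp K n -> Prop) :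
  ordered_group leG ->
  valuation leG v ->
  monomial_ordering lt ->
  monic_GB lt Gb (ideal_gen Gb) ->
  (forall g, Gb g -> ncOv leG v g) ->
  (forall g u, Gb g -> is_LM lt g u -> u <> [::]) ->
  (* (i) exhaustive Gamma-filtration of A, with F_gamma K = K cap F_gamma A *)
  ((forall gm, FA leG v lt Gb gm (@nc0 K n) /\
        forall f h, finsupp f -> finsupp h -> FA leG v lt Gb gm f ->
          FA leG v lt Gb gm h -> FA leG v lt Gb gm (ncsub f h)) /\
  [/\ (forall f, finsupp f -> exists gm, FA leG v lt Gb gm f),
      (forall g1 g2 f, ltG leG g1 g2 -> FA leG v lt Gb g1 f -> FA leG v lt Gb g2 f),
      (forall g1 g2 f h, finsupp f -> finsupp h ->
         FA leG v lt Gb g1 f -> FA leG v lt Gb g2 h ->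
         FA leG v lt Gb (g1 + g2) (ncmul f h)),
      FA leG v lt Gb 0 (@nc1 K n)
    & (forall gm (c : K), FK leG v gm c <-> FA leG v lt Gb gm (@ncC K n c))]) /\
  (* (ii) separated, and 1 in F_0 A \ F_{<0} A *)
  ((forall f, finsupp f -> ~ congI Gb f (@nc0 K n) ->
      exists gm, FA leG v lt Gb gm f /\ ~ FAlt leG v lt Gb gm f) /\
   (FA leG v lt Gb 0 (@nc1 K n) /\ ~ FAlt leG v lt Gb 0 (@nc1 K n))) /\
  (* (iii) F_0 A = O_v<X>/<G> = Lambda,  F_{<0} A = m_v F_0 A = m_v Lambda *)
  [/\ (forall f, finsupp f ->
         (FA leG v lt Gb 0 f <-> exists p, ncOv leG v p /\ congI Gb f p)),
      (forall p, ncOv leG v p -> (ideal_gen Gb p <-> ideal_gen_Ov leG v Gb p)),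
      (forall f, finsupp f ->
         (FAlt leG v lt Gb 0 f <->
          exists l : seq (K * ncp K n),
            (forall t, List.In t l ->
               [/\ in_mv leG v t.1, finsupp t.2 & FA leG v lt Gb 0 t.2]) /\
            congI Gb f (ncsum [seq ncscale t.1 t.2 | t <- l])))
    & (forall f, finsupp f ->
         (FAlt leG v lt Gb 0 f <->
          exists l : seq (K * ncp K n),
            (forall t, List.In t l -> in_mv leG v t.1 /\ ncOv leG v t.2) /\
            congI Gb f (ncsum [seq ncscale t.1 t.2 | t <- l])))] /\
  (* (iv) F^v A is strong and G(A) is strongly graded *)
  ((forall g1 g2 f, finsupp f ->
      (FA leG v lt Gb (g1 + g2) f <->
       exists l : seq (ncp K n * ncp K n),
         (forall t, List.In t l ->
            [/\ finsupp t.1, finsupp t.2, FA leG v lt Gb g1 t.1 & FA leG v lt Gb g2 t.2]) /\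
         congI Gb f (ncsum [seq ncmul t.1 t.2 | t <- l]))) /\
   (forall g1 g2 f, finsupp f -> FA leG v lt Gb (g1 + g2) f ->
      exists (l : seq (ncp K n * ncp K n)) (r : ncp K n),
        (forall t, List.In t l ->
           [/\ finsupp t.1, finsupp t.2, FA leG v lt Gb g1 t.1 & FA leG v lt Gb g2 t.2]) /\
        finsupp r /\ FAlt leG v lt Gb (g1 + g2) r /\
        congI Gb f (ncadd (ncsum [seq ncmul t.1 t.2 | t <- l]) r))).
Proof.
move=> HG Hv Hmo HGB HGbOv HLM.
have Hst := mo_st Hmo.
have HGbfs : forall g, Gb g -> finsupp g by move=> g Hg; case: (HGB.1 g Hg).
have HnilN : inN lt Gb [::].
  move=> g u Hg Hu; apply/negP => /infixP [s [s' E]].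
  apply: (HLM g u Hg Hu); move: (congr1 size E); rewrite !size_cat /= => Hs.
  apply/size0nil; move: Hs; move: (size u) (size s) (size s') => x y z; lia.
have NF := NF_exists HG Hv Hmo HGB HGbOv.
have FKc := FK_closed HG Hv.
have FK0 : forall gm, FK leG v gm 0 by move=> gm; case: (FKc gm).
have FK01 : FK leG v 0 (1 : K) by rewrite /FK (v1 Hv) oppr0 /=; exact: og_refl.
have cpw : forall f h : ncp K n, f =1 h -> congI Gb f h.
  move=> f h H; apply: I0 => w; by rewrite /ncsub H subrr.
have Z0 : Sclosed leG v (fun x : K => x = 0).
  by split => [|x y -> ->|x ->|a x _ ->]; rewrite ?addr0 ?oppr0 ?mulr0.
have FAchar : forall gm f, FA leG v lt Gb gm f <->
    exists p, [/\ finsupp p, (forall w, FK leG v gm (p w)) & congI Gb f p].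
  move=> gm f; split.
    move=> [l [Hl Hc]]; exists (nf l); split => //; first exact: finsupp_nf.
    apply: (nf_S (FKc gm)) => t Ht; exact: (Hl t Ht).1.
  move=> [p [Hp HSp Hc]]; have [l [Hl HI]] := NF _ (FKc gm) p Hp HSp.
  exists l; split => //; apply: (congI_trans Hc); exact: (idealS_gen HGbfs HI).
have FAuniq : forall gm f (l : seq (K * word n)), FA leG v lt Gb gm f ->
    (forall t, List.In t l -> inN lt Gb t.2) ->
    congI Gb f (nf l) -> forall w, FK leG v gm (nf l w).
  move=> gm f l [l' [Hl' Hc']] Hl Hc w.
  rewrite (nf_unique2 Hst HGB Hl (fun t Ht => (Hl' t Ht).2) (congI_trans (congI_sym Hc) Hc')).
  apply: (nf_S (FKc gm)) => t Ht; exact: (Hl' t Ht).1.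
have FA_cong : forall gm f h, congI Gb f h -> FA leG v lt Gb gm h -> FA leG v lt Gb gm f.
  move=> gm f h Hfh [l [Hl Hc]]; exists l; split => //; exact: (congI_trans Hfh Hc).
have FA0 : forall gm, FA leG v lt Gb gm (@nc0 K n).
  move=> gm; apply: (FA_intro (l := [::])) => //; apply: cpw => w; by rewrite nf_nil.
have FA_sub : forall gm f h, FA leG v lt Gb gm f -> FA leG v lt Gb gm h ->
    FA leG v lt Gb gm (ncsub f h).
  move=> gm f h [l1 [Hl1 Hc1]] [l2 [Hl2 Hc2]].
  change (congI Gb f (nf l1)) in Hc1; change (congI Gb h (nf l2)) in Hc2.
  apply: (FA_intro (l := l1 ++ [seq (- t.1, t.2) | t <- l2])).
    move=> t Ht; case: (List.in_app_or _ _ _ Ht) => Ht'; first exact: (Hl1 t Ht').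
    apply List.in_map_iff in Ht'; destruct Ht' as [t' [<- Ht'']]; have [H1 H2] := Hl2 t' Ht''.
    split => //=; by case: (FKc gm) => _ _ Hn _; apply: Hn.
  apply: (I_ext _ (I_sub Hc1 Hc2)) => w; rewrite /ncsub nf_cat nf_neg.
  ring.
have FA_ext : forall gm f h, f =1 h -> FA leG v lt Gb gm f -> FA leG v lt Gb gm h.
  move=> gm f h H HF; apply: (FA_cong gm h f) => //; apply: cpw => w; by rewrite H.
have FA_add : forall gm f h, FA leG v lt Gb gm f -> FA leG v lt Gb gm h ->
    FA leG v lt Gb gm (ncadd f h).
  move=> gm f h Hf Hh; apply: (FA_ext gm (ncsub f (ncsub (@nc0 K n) h))).
    by move=> w; rewrite /ncsub /ncadd /nc0 sub0r opprK.
  exact: (FA_sub _ _ _ Hf (FA_sub _ _ _ (FA0 gm) Hh)).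
have FA_sum : forall gm L, (forall x, List.In x L -> FA leG v lt Gb gm x) ->
    FA leG v lt Gb gm (ncsum L).
  move=> gm; elim => [|x L IH] H; first exact: FA0.
  apply: FA_add; first by apply: H; left.
  by apply: IH => y Hy; apply: H; right.
have FA_mul : forall g1 g2 f h, finsupp h -> FA leG v lt Gb g1 f -> FA leG v lt Gb g2 h ->
    FA leG v lt Gb (g1 + g2) (ncmul f h).
  move=> g1 g2 f h Hh /FAchar [p [Hp HSp Hcp]] /FAchar [q [Hq HSq Hcq]].
  apply/FAchar; exists (ncmul p q); split.
  - exact: finsupp_mul.
  - move=> w; rewrite /ncmul; apply: (big_ind (FK leG v (g1 + g2))).
    + exact: FK0.
    + by move=> x y; case: (FKc (g1 + g2)) => _ Ha _ _; apply: Ha.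
    + move=> i _; exact: (FK_mul HG Hv).
  - exact: (congI_mul Hp Hh Hcp Hcq).
have FA_mono : forall g1 g2 f, ltG leG g1 g2 -> FA leG v lt Gb g1 f -> FA leG v lt Gb g2 f.
  move=> g1 g2 f [_ Hle] [l [Hl Hc]]; exists l; split => // t Ht; have [H1 H2] := Hl t Ht.
  split => //; exact: (FK_mono HG Hle).
have FA1 : FA leG v lt Gb 0 (@nc1 K n).
  apply: (FA_intro (l := [:: (1, [::])])); first by move=> t [<-|[]].
  apply: cpw => w; by rewrite nf_single /nc1.
have FA_C : forall gm (c : K), FK leG v gm c <-> FA leG v lt Gb gm (@ncC K n c).
  move=> gm c; split.
    move=> Hc; apply: (FA_intro (l := [:: (c, [::])])); first by move=> t [<-|[]].
    apply: cpw => w; by rewrite nf_single /ncC.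
  move=> HF; have := FAuniq gm _ [:: (c, [::])] HF _ _ [::].
  rewrite nf_single eqxx; apply; first by move=> t [<-|[]].
  apply: cpw => w; by rewrite nf_single /ncC.
have Lt0 : forall f P, finsupp P -> (forall w, in_mv leG v (P w)) -> congI Gb f P ->
    FAlt leG v lt Gb 0 f.
  move=> f P HP HmP Hc.
  have [l [Hl HI]] := NF _ (mv_closed HG Hv) P HP HmP.
  have Hc' := congI_trans Hc (idealS_gen HGbfs HI).
  have [g [Hall Hor]] := min_exists HG Hv [seq t.1 | t <- l].
  case: Hor => [Hz|[c [Hc1 Hc0 Hvc]]].
    left; apply: (congI_trans Hc'); apply: cpw => w.
    rewrite /nc0; apply: (nf_S Z0) => t Ht; apply: Hz; apply: map_f; exact: In_mem.
  right; exists g; split.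
    case/mapP: Hc1 => t Ht Ec; have [Hmv _] := Hl t (mem_In Ht).
    move: Hmv; rewrite -Ec /in_mv Hvc /= => [[H1 H2]]; split.
      by move=> Eg; apply: H2; rewrite Eg oppr0.
    have := og_opp HG H1; by rewrite opprK oppr0.
  exists l; split => // t Ht; split; last exact: (Hl t Ht).2.
  apply: Hall; apply: map_f; exact: In_mem.
have Lt0_inv : forall f, FAlt leG v lt Gb 0 f -> exists l0 : seq (K * word n),
    (forall t, List.In t l0 -> in_mv leG v t.1 /\ inN lt Gb t.2) /\ congI Gb f (nf l0).
  move=> f [Hc|[g' [[Hne Hle] [l [Hl Hc]]]]].
    exists [::]; split => //; apply: (congI_trans Hc); apply: cpw => w; by rewrite nf_nil.
  exists l; split => // t Ht; have [HK HN] := Hl t Ht; split => //.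
  move: HK; rewrite /FK /in_mv; case: (v t.1) => [a|] //= Ha.
  have H0g : leG 0 (- g') by have := og_opp HG Hle; rewrite oppr0.
  split; first exact: (og_trans HG H0g Ha).
  move=> [] Ea; apply: Hne; rewrite Ea in Ha.
  apply: (og_anti HG Hle); have := og_opp HG Ha; by rewrite opprK oppr0.
have collect : forall l : seq (K * ncp K n), (forall t, List.In t l -> in_mv leG v t.1 /\
      exists p, [/\ finsupp p, (forall w, in_Ov leG v (p w)) & congI Gb t.2 p]) ->
    exists P, [/\ finsupp P, (forall w, in_mv leG v (P w))
                 & congI Gb (ncsum [seq ncscale t.1 t.2 | t <- l]) P].
  elim => [|t l IH] H.
    exists (@nc0 K n); split; [exact: finsupp0 | by move=> w; case: (mv_closed HG Hv) | exact: congI_refl].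
  have [Hm [p [Hp HOp Hcp]]] := H t (or_introl erefl).
  have [P [HP HmP HcP]] := IH (fun t' Ht' => H t' (or_intror Ht')).
  exists (ncadd (ncscale t.1 p) P); split.
  - apply: finsupp_add => //; exact: finsupp_scale.
  - move=> w; have [_ Ha _ Hmul] := mv_closed HG Hv; rewrite /ncadd /ncscale; apply: Ha => //.
    rewrite mulrC; exact: Hmul.
  - rewrite map_cons; apply: (I_ext _ (I_add (I_scale t.1 Hcp) HcP)) => w.
    rewrite /ncsub /ncadd ncsum_cons /ncscale mulrBr.
    by rewrite opprD addrACA.
have IV1 : forall g1 g2 f, finsupp f ->
      (FA leG v lt Gb (g1 + g2) f <->
       exists l : seq (ncp K n * ncp K n),
         (forall t, List.In t l ->
            [/\ finsupp t.1, finsupp t.2, FA leG v lt Gb g1 t.1 & FA leG v lt Gb g2 t.2]) /\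
         congI Gb f (ncsum [seq ncmul t.1 t.2 | t <- l])).
  move=> g1 g2 f Hf; split.
    move=> [l0 [Hl0 Hc0]].
    have [_ _ _ Hsurj] := Hv; have [a Ha] := Hsurj (Some (- g1)).
    have Ha0 : a != 0 by apply/eqP => Ea; move: Ha; rewrite Ea (v0 Hv).
    exists [seq (ncC a, ncscale (t.1 / a) (ncmono K t.2)) | t <- l0]; split.
      move=> t Ht; apply List.in_map_iff in Ht; destruct Ht as [t' [<- Ht']] => /=.
      have [HK HN] := Hl0 t' Ht'; split.
      - exact: finsupp_C.
      - apply: finsupp_scale; exact: finsupp_mono.
      - apply/FA_C; rewrite /FK Ha /=; exact: og_refl.
      - apply: (FA_intro (l := [:: (t'.1 / a, t'.2)])).
          move=> t [<-|[]]; split => //; exact: (FK_div HG Hv Ha HK).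
        apply: cpw => w; rewrite nf_single /ncscale /ncmono; by case: ifP; rewrite ?mulr1 ?mulr0.
    apply: (congI_trans Hc0); apply: cpw => w; rewrite -map_comp; apply: ncsum_map_ext => t /=.
    rewrite ncmul_C /ncscale mulrA mulrCA mulfV // mulr1 //.
  move=> [l [Hl Hc]]; apply: (FA_cong _ f _ Hc); apply: FA_sum => x Hx.
  apply List.in_map_iff in Hx; destruct Hx as [t [<- Ht]].
  have [H1 H2 H3 H4] := Hl t Ht; exact: (FA_mul _ _ _ _ H2 H3 H4).
split.
  split; first by move=> gm; split => // f h _ _; exact: FA_sub.
  split => //.
  - move=> f Hf; have [l [Hl HI]] := NF _ (True_closed leG v) f Hf (fun _ => I).
    have [g [Hall _]] := min_exists HG Hv [seq t.1 | t <- l].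
    exists g, l; split; last exact: (idealS_gen HGbfs HI).
    move=> t Ht; split; last exact: (Hl t Ht).2.
    apply: Hall; apply: map_f; exact: In_mem.
  - move=> g1 g2 f h _ Hh; exact: FA_mul.
split.
  split.
    move=> f Hf Hn0; have [l [Hl HI]] := NF _ (True_closed leG v) f Hf (fun _ => I).
    have Hc := idealS_gen HGbfs HI.
    have HlN : forall t, List.In t l -> inN lt Gb t.2 by move=> t Ht; exact: (Hl t Ht).2.
    have [g [Hall Hor]] := min_exists HG Hv [seq nf l u | u <- [seq t.2 | t <- l]].
    have Hin : forall w, nf l w != 0 -> nf l w \in [seq nf l u | u <- [seq t.2 | t <- l]].
      move=> w /nf_supp [t [Ht <-]]; apply: map_f; apply: map_f; exact: In_mem.
    case: Hor => [Hz|[c [Hc1 Hc0 Hvc]]].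
      exfalso; apply: Hn0; apply: (congI_trans Hc); apply: cpw => w.
      by case: (eqVneq (nf l w) 0) => [->|/Hin /Hz ->].
    exists g; split.
      apply/FAchar; exists (nf l); split => //; first exact: finsupp_nf.
      move=> w; case: (eqVneq (nf l w) 0) => [->|/Hin]; [exact: FK0|exact: Hall].
    move=> [H0|[g' [[Hne Hle] HF]]]; first by apply: Hn0.
    case/mapP: Hc1 => u Hu Ec.
    have := FAuniq g' f l HF HlN Hc u; rewrite /FK -Ec Hvc /= => H.
    apply: Hne; apply: (og_anti HG Hle); exact: (og_opp_iff HG H).
  split => //; move=> [H0|[g' [[Hne Hle] HF]]].
    have H1 : congI Gb (nf [:: (1, [::])]) (nf [::]).
      apply: (congI_trans _ (congI_trans H0 _)); apply: cpw => w; by rewrite ?nf_single ?nf_nil.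
    have := nf_unique2 Hst HGB _ _ H1 [::]; rewrite nf_single nf_nil eqxx => E.
    by move: (oner_neq0 K); rewrite E ?eqxx //; move=> t [<-|[]].
  have := FAuniq g' _ [:: (1, [::])] HF _ _ [::]; rewrite nf_single eqxx /FK (v1 Hv) /=.
  move=> H; apply: Hne; apply: (og_anti HG Hle); apply: og_opp_iff HG _ _ _; rewrite oppr0; apply: H.
    by move=> t [<-|[]].
  apply: cpw => w; by rewrite nf_single /nc1.
split.
  split.
  - move=> f Hf; split.
      move=> /FAchar [p [Hp HSp Hc]]; exists p; split => //; split => // w; exact/FK0_Ov.
    move=> [p [[Hp HOp] Hc]]; apply/FAchar; exists p; split => // w; exact/FK0_Ov.
  - move=> p [Hp HOp]; split; last first.
      move=> [l [Hl Hw]]; exists l; split => // t Ht; have [[H1 _] H2 [H3 _]] := Hl t Ht; by split.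
    move=> HIp; have [l [Hl HI]] := NF _ (Ov_closed HG Hv) p Hp HOp.
    have Hz : forall w, nf l w = 0.
      apply: (nf_unique Hst HGB (fun t Ht => (Hl t Ht).2)).
      apply: (I_ext _ (I_sub HIp (idealS_gen HGbfs HI))) => w; by rewrite /ncsub opprB addrC subrK.
    apply: (idealS_Ov HG Hv HGbfs); apply: (idealS_ext _ HI) => w; by rewrite /ncsub Hz subr0.
  - move=> f Hf; split.
      move=> /Lt0_inv [l0 [Hl0 Hc0]].
      exists [seq (t.1, ncmono K t.2) | t <- l0]; split; last by rewrite -map_comp.
      move=> t Ht; apply List.in_map_iff in Ht; destruct Ht as [t' [<- Ht']] => /=.
      have [Hm HN] := Hl0 t' Ht'; split => //; first exact: finsupp_mono.
      apply: (FA_intro (l := [:: (1, t'.2)])); first by move=> t [<-|[]].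
      apply: cpw => w; rewrite nf_single /ncmono; by case: ifP.
    move=> [l [Hl Hc]].
    have Hl' : forall t, List.In t l -> in_mv leG v t.1 /\
        exists p, [/\ finsupp p, (forall w, in_Ov leG v (p w)) & congI Gb t.2 p].
      move=> t Ht; have [H1 H2 H3] := Hl t Ht; split => //.
      have [p [Hp HSp Hcp]] := (FAchar 0 t.2).1 H3; exists p; split => // w; exact/FK0_Ov.
    have [P [HP HmP HcP]] := collect l Hl'.
    exact: (Lt0 f P HP HmP (congI_trans Hc HcP)).
  - move=> f Hf; split.
      move=> /Lt0_inv [l0 [Hl0 Hc0]].
      exists [seq (t.1, ncmono K t.2) | t <- l0]; split; last by rewrite -map_comp.
      move=> t Ht; apply List.in_map_iff in Ht; destruct Ht as [t' [<- Ht']] => /=.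
      have [Hm HN] := Hl0 t' Ht'; split => //; split; first exact: finsupp_mono.
      move=> w; rewrite /ncmono; case: ifP => _; first exact: (Ov1 HG Hv).
      by rewrite /in_Ov (v0 Hv).
    move=> [l [Hl Hc]].
    have Hl' : forall t, List.In t l -> in_mv leG v t.1 /\
        exists p, [/\ finsupp p, (forall w, in_Ov leG v (p w)) & congI Gb t.2 p].
      move=> t Ht; have [H1 [H2 H3]] := Hl t Ht; split => //.
      exists t.2; split => //; exact: congI_refl.
    have [P [HP HmP HcP]] := collect l Hl'.
    exact: (Lt0 f P HP HmP (congI_trans Hc HcP)).
split => //.
move=> g1 g2 f Hf HF; have [l [Hl Hc]] := (IV1 g1 g2 f Hf).1 HF.
exists l, (@nc0 K n); split => //; split; first exact: finsupp0.
split; first by left; exact: congI_refl.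
apply: (congI_trans Hc); apply: cpw => w; by rewrite /ncadd /nc0 addr0.
Qed.
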